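(* Let $v\equiv 3$ or $15\pmod{18}$ and let $S=(\mathbb{Z}_v,\mathcal{B})$ be a cyclic $\mathrm{STS}(v)$ (with cyclic automorphism $i\mapsto i+1\bmod v$) having no full orbit of Type $3$. Then $S$ has no full orbit of Type $1$ (i.e. all full orbits are of Type $2$).
   Context: A Steiner triple system $\mathrm{STS}(v)$ is a pair $(X,\mathcal{B})$ with $|X|=v$ and $\mathcal{B}$ a collection of 3-subsets of $X$ such that every 2-subset lies in exactly one block. It is cyclic if (after relabeling) $X=\mathbb{Z}_v$ and the map $\alpha: i\mapsto i+1 \pmod v$ maps blocks to blocks. The blocks are partitioned into orbits under the group generated by $\alpha$; an orbit with $v$ blocks is a full orbit. For $v\equiv 3\pmod 6$ there is exactly one short orbit, the orbit of $\{0,v/3,2v/3\}$, of size $v/3$. When $3\mid v$, an orbit is of Type $i$ ($i=1,2,3$) if every block in it contains elements of exactly $i$ distinct residue classes modulo $3$. *)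

(* Defs.v *)
From mathcomp Require Import all_boot all_algebra.
Set Implicit Arguments. Unset Strict Implicit. Unset Printing Implicit Defensive.
Import GRing.Theory.
Local Open Scope ring_scope.

(* Points are Z_v ('Z_v, which is Z/vZ whenever 1 < v; the main theorem's
   hypothesis v = 3 or 15 mod 18 forces v >= 3). A block is a 3-subset. *)

Definition is_STS (v : nat) (B : {set {set 'Z_v}}) : Prop :=
  (forall b, b \in B -> #|b| = 3%N) /\
  (forall x y : 'Z_v, x != y ->
     #|[set b in B | (x \in b) && (y \in b)]| = 1%N).

Definition translate (v : nat) (b : {set 'Z_v}) (k : 'Z_v) : {set 'Z_v} :=
  [set x + k | x in b].

Definition is_cyclic (v : nat) (B : {set {set 'Z_v}}) : Prop :=
  forall b, b \in B -> translate b 1 \in B.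

Definition block_orbit (v : nat) (b : {set 'Z_v}) : {set {set 'Z_v}} :=
  [set translate b k | k : 'Z_v].

Definition full_orbit (v : nat) (b : {set 'Z_v}) : Prop :=
  #|block_orbit b| = v.

Definition n_classes (v : nat) (b : {set 'Z_v}) : nat :=
  size (undup [seq (nat_of_ord x %% 3)%N | x <- enum b]).

Definition orbit_of_type (v : nat) (O : {set {set 'Z_v}}) (i : nat) : Prop :=
  forall b, b \in O -> n_classes b = i.

(* Main.v *)
Require Import Defs.
From mathcomp Require Import all_boot all_algebra zify.
Import GRing.Theory.
Set Implicit Arguments. Unset Strict Implicit. Unset Printing Implicit Defensive.
Local Open Scope ring_scope.



Lemma sumb_card (T : finType) (P : pred T) : (\sum_(x : T) (P x : nat) = #|P|)%N.
Proof. by rewrite -sum1_card [RHS]big_mkcond. Qed.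

Lemma sumb_cards (T : finType) (A : {set T}) : (\sum_(x : T) (x \in A : nat) = #|A|)%N.
Proof. by rewrite -sum1_card [RHS]big_mkcond. Qed.

Lemma card_setin (T : finType) (B : {set T}) (P : pred T) :
  #|[set b in B | P b]| = (\sum_(b in B) P b)%N.
Proof. rewrite -sumb_cards [RHS]big_mkcond /=. apply: eq_bigr => i _. by rewrite inE; case: (i \in B). Qed.

Definition pc v (b : {set 'Z_v}) (Q : 'Z_v -> 'Z_v -> bool) : nat :=
  (\sum_(x : 'Z_v) \sum_(y : 'Z_v) [&& x \in b, y \in b, x != y & Q x y])%N.

Lemma dcount v (B : {set {set 'Z_v}}) Q : is_STS B ->
  (\sum_(b in B) pc b Q = \sum_x \sum_y ((x != y) && Q x y))%N.
Proof.
move=> [_ hS]. rewrite /pc exchange_big /=. apply eq_bigr => x _.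
rewrite exchange_big. apply eq_bigr => y _.
case: (boolP ((x != y) && Q x y)) => [/andP[hxy hq] | hn].
- transitivity 1%N; last done. rewrite -(hS x y hxy) card_setin. apply: eq_bigr => i _. by rewrite andbT.
- by rewrite big1 // => i _; rewrite !andbF.
Qed.

Lemma pc_all v (b : {set 'Z_v}) (Q : 'Z_v -> 'Z_v -> bool) : #|b| = 3%N -> {in b &, forall x y, Q x y} ->
  pc b Q = 6%N.
Proof.
move=> hb hQ. rewrite /pc.
transitivity (\sum_(x : 'Z_v) (x \in b : nat) * 2)%N.
  apply: eq_bigr => x _. case: (boolP (x \in b)) => xb /=; last by rewrite big1.
  transitivity (#|b :\ x|).
    rewrite -sumb_cards; apply: eq_bigr => y _. rewrite !inE eq_sym.
    case: (boolP (y \in b)) => yb; rewrite ?andbF ?andbT //=.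
    by rewrite hQ // andbT.
  by move: hb; rewrite (cardsD1 x) xb add1n => -[->].
transitivity ((\sum_(x : 'Z_v) (x \in b : nat)) * 2)%N; first by rewrite big_distrl.
by rewrite sumb_cards hb.
Qed.

Lemma valD v (x y : 'Z_v) : (1 < v)%N -> val (x + y) = ((val x + val y) %% v)%N.
Proof. move=> h. rewrite /=. congr (_ %% _)%N. exact: Zp_cast. Qed.
Lemma ltv v (x : 'Z_v) : (1 < v)%N -> (val x < v)%N.
Proof. move=> h. case: x => i hi /=. by rewrite Zp_cast in hi. Qed.
Lemma cardZ v : (1 < v)%N -> #|'Z_v| = v.
Proof. move=> h. by rewrite card_ord Zp_cast. Qed.

Lemma transl_comp v (b : {set 'Z_v}) k1 k2 :
  translate (translate b k1) k2 = translate b (k1 + k2).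
Proof. rewrite /translate -imset_comp. apply: eq_imset => x /=. by rewrite addrA. Qed.

Lemma transl0 v (b : {set 'Z_v}) : translate b 0 = b.
Proof.
apply/setP => x; apply/imsetP/idP => [[y hy ->]|hx]; first by rewrite addr0.
by exists x; rewrite ?addr0.
Qed.

Lemma transl_mem v (b : {set 'Z_v}) d x : translate b d = b -> x \in b -> x + d \in b.
Proof. move=> hd hx. rewrite -hd. exact: imset_f. Qed.

Lemma nonfull_fix v (b : {set 'Z_v}) : (1 < v)%N -> #|block_orbit b| != v ->
  exists d, d != 0 /\ translate b d = b.
Proof.
move=> hv hn. case: (pickP (fun d => (d != 0) && (translate b d == b))) => [d /andP[h1 /eqP h2]|hno].
  by exists d.
case/negP: hn. rewrite /block_orbit. apply/eqP. transitivity #|'Z_v|; last exact: cardZ. apply: card_imset => k1 k2 h.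
have : translate b (k1 - k2) = b.
  by rewrite -transl_comp h transl_comp subrr transl0.
move/eqP => h'. move: (hno (k1 - k2)). rewrite h' andbT => /negbFE. by rewrite subr_eq0 => /eqP.
Qed.

Lemma dbl_ne0 v k : (1 < v)%N -> (v %% 2 = 1)%N -> (0 < k < v)%N -> ((k + k) %% v != 0)%N.
Proof.
move=> hv ho hk. case: (ltnP (k + k) v) => h.
  rewrite modn_small //. lia.
have -> : (k + k = v + (k + k - v))%N by lia.
rewrite modnDl modn_small; lia.
Qed.

Lemma fix_M v m (M : 'Z_v) (b : {set 'Z_v}) d :
  (1 < v)%N -> (v %% 2 = 1)%N -> v = (3 * m)%N -> val M = m ->
  #|b| = 3%N -> d != 0 -> translate b d = b -> translate b M = b.
Proof.
move=> hv ho hvm hM hb hd0 hfix.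
have [x hx] : exists x, x \in b by apply/set0Pn; rewrite -card_gt0 hb.
have h1 := transl_mem hfix hx. have h2 := transl_mem hfix h1. have h3 := transl_mem hfix h2.
have hk : (0 < val d < v)%N.
  rewrite ltv // andbT lt0n. apply: contra hd0 => /eqP h. by apply/eqP/val_inj.
have hdd : d + d != 0.
  apply/negP => /eqP h. have := dbl_ne0 hv ho hk. by rewrite -valD // h.
set S := x |: [set x + d; x + d + d].
have hS : S \subset b by apply/subsetP => y hy; move: hy; rewrite !inE; case/or3P => /eqP ->.
have e1 : (x == x + d) = false.
  by rewrite -{1}(addr0 x) (inj_eq (addrI x)) eq_sym (negbTE hd0).
have e2 : (x == x + d + d) = false.
  by rewrite -addrA -{1}(addr0 x) (inj_eq (addrI x)) eq_sym (negbTE hdd).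
have e3 : (x + d == x + d + d) = false.
  by rewrite -{1}(addr0 (x + d)) (inj_eq (addrI _)) eq_sym (negbTE hd0).
have cS : #|S| = 3%N by rewrite cardsU1 cards2 !inE e1 e2 e3.
have eS : S = b by apply/eqP; rewrite eqEcard hS cS hb.
have h3' : x + d + d + d \in S by rewrite eS.
move: h3'; rewrite !inE; case/or3P => /eqP h.
- rewrite -!addrA -{2}(addr0 x) in h. move/addrI: h => h.
  have := congr1 val h. rewrite !valD //= modnDmr; clear h3 => h3.
  have hm0 : (0 < m)%N by clear -hv hvm; lia.
  have hk2 : (0 < nat_of_ord d < v)%N := hk.
  clear hk; move: h3 hk2; move Ek : (nat_of_ord d) => k h3 hk.
  have hdv : (m %| k)%N.
    have : (v %| k + (k + k))%N by rewrite /dvdn h3.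
    have -> : (k + (k + k) = 3 * k)%N by clear; lia.
    by rewrite hvm dvdn_pmul2l.
  case/dvdnP: hdv => j hj.
  have hk' := hk. rewrite hj hvm in hk'.
  have : (j = 1 \/ j = 2)%N by clear -hk' hm0; nia.
  case=> hj'; subst j.
  + have -> : M = d by apply: val_inj; rewrite hM /= Ek hj mul1n.
    exact: hfix.
  + have -> : M = d + d.
      apply: val_inj. rewrite hM valD // /= Ek hj.
      have -> : (2 * m + 2 * m = 3 * m + m)%N by clear; lia.
      rewrite hvm modnDl modn_small //. clear -hm0; lia.
    by rewrite -transl_comp !hfix.
- rewrite -!addrA in h. move/addrI: h => h.
  have h' : d + d + d = 0 + d by rewrite add0r -addrA h.
  move/addIr: h' => h2d.
  by rewrite h2d eqxx in hdd.
- rewrite -{2}(addr0 (x + d + d)) in h. move/addrI: h => h.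
  by rewrite h eqxx in hd0.
Qed.

Lemma fix_count v m (M : 'Z_v) (B : {set {set 'Z_v}}) : (1 < v)%N -> val M = m -> (0 < m)%N ->
  is_STS B -> (3 * #|[set b in B | translate b M == b]| <= v)%N.
Proof.
move=> hv hM hm [hB3 hS].
set F := [set b in B | translate b M == b].
have e : (\sum_(b in F) #|b| = 3 * #|F|)%N.
  rewrite (eq_bigr (fun _ => 3%N)); last by move=> b; rewrite inE => /andP[/hB3].
  by rewrite sum_nat_const mulnC.
rewrite -e. under eq_bigr => b _ do rewrite -sumb_cards.
rewrite exchange_big /=. apply: (@leq_trans (\sum_(x : 'Z_v) 1)%N); last by rewrite sum1_card cardZ.
apply: leq_sum => x _.
have hM0 : x != x + M.
  rewrite -{1}(addr0 x) (inj_eq (addrI x)) eq_sym. apply/eqP => h0.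
  by move: hM; rewrite h0 /= => h1; move: hm; rewrite -h1.
rewrite -card_setin -(hS x (x + M) hM0). apply: subset_leq_card.
apply/subsetP => b; rewrite !inE => /andP[/andP[hb /eqP hf] hx].
by rewrite hb hx (transl_mem hf hx).
Qed.



Definition cls v (x : 'Z_v) : nat := (nat_of_ord x %% 3)%N.
Definition hp v (b : {set 'Z_v}) : bool :=
  [exists x, exists y, [&& x \in b, y \in b, x != y & cls x == cls y]].

Lemma uniq_map_inj (T1 T2 : eqType) (f : T1 -> T2) s :
  uniq (map f s) -> {in s &, injective f}.
Proof.
elim: s => [|a s IH] //= /andP[ha hu] x y; rewrite !inE => /predU1P[->|hx] /predU1P[->|hy] hf //.
- by case/negP: ha; rewrite hf map_f.
- by case/negP: ha; rewrite -hf map_f.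
- exact: IH.
Qed.

Lemma nc3 v (b : {set 'Z_v}) : #|b| = 3%N -> (n_classes b == 3%N) = ~~ hp b.
Proof.
move=> hb. rewrite /n_classes.
have hs : size (enum b) = 3%N by rewrite -cardE.
apply/idP/idP.
- move=> /eqP h. apply/existsP => -[x /existsP [y /and4P [hx hy hxy hc]]].
  have hu : uniq [seq (nat_of_ord x %% 3)%N | x <- enum b].
    by rewrite (uniq_size_uniq (undup_uniq _) (mem_undup _)) size_map hs h.
  have := uniq_map_inj hu. rewrite -mem_enum in hx. rewrite -mem_enum in hy.
  move=> /(_ x y hx hy (eqP hc)) exy. by rewrite exy eqxx in hxy.
- move=> hn.
  have hi : {in enum b &, injective (fun x : 'Z_v => (nat_of_ord x %% 3)%N)}.
    move=> x y; rewrite !mem_enum => hx hy hc. apply/eqP; apply: contraNT hn => hxy.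
    apply/existsP; exists x; apply/existsP; exists y. by rewrite hx hy hxy /cls hc eqxx.
  by rewrite undup_id ?size_map ?hs // map_inj_in_uniq // enum_uniq.
Qed.

Lemma valD' v (x y : 'Z_v) : (1 < v)%N -> nat_of_ord (x + y) = ((nat_of_ord x + nat_of_ord y) %% v)%N.
Proof. exact: valD. Qed.

Lemma hp_transl v (b : {set 'Z_v}) k : (1 < v)%N -> (3 %| v)%N -> hp (translate b k) -> hp b.
Proof.
move=> hv h3 /existsP [x' /existsP [y' /and4P [hx hy hxy hc]]].
case/imsetP: hx => x hx ex. case/imsetP: hy => y hy ey. subst x' y'.
apply/existsP; exists x; apply/existsP; exists y. rewrite hx hy /=; apply/andP; split.
  by apply: contra hxy => /eqP ->.
move: hc; rewrite /cls !valD' // !(modn_dvdm _ h3). by rewrite eqn_modDr.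
Qed.

Lemma card_transl v (b : {set 'Z_v}) k : #|translate b k| = #|b|.
Proof. apply: card_imset. exact: addIr. Qed.

Lemma sum2 (T : finType) (G : T -> nat) x y : x != y -> (G x + G y <= \sum_a G a)%N.
Proof.
move=> hxy. rewrite (bigD1 x) //= (bigD1 y) /=; last by rewrite eq_sym.
by rewrite addnA leq_addr.
Qed.

Lemma sum1 (T : finType) (G : T -> nat) x : (G x <= \sum_a G a)%N.
Proof. by rewrite (bigD1 x) //= leq_addr. Qed.

Lemma hp_pc v (b : {set 'Z_v}) : hp b -> (2 <= pc b (fun x y => cls x == cls y))%N.
Proof.
move=> /existsP [x /existsP [y /and4P [hx hy hxy hc]]].
apply: leq_trans (sum2 _ hxy). rewrite -[2%N]/(1 + 1)%N. apply: leq_add.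
- apply: leq_trans (sum1 _ y). by rewrite hx hy hxy hc.
- apply: leq_trans (sum1 _ x). by rewrite hx hy eq_sym hxy eq_sym hc.
Qed.

Lemma nc1 v (b : {set 'Z_v}) : n_classes b = 1%N -> {in b &, forall x y, cls x == cls y}.
Proof.
move=> h x y hx hy. move: h; rewrite /n_classes.
have : cls x \in undup [seq (nat_of_ord x %% 3)%N | x <- enum b] by rewrite mem_undup map_f ?mem_enum.
have : cls y \in undup [seq (nat_of_ord x %% 3)%N | x <- enum b] by rewrite mem_undup map_f ?mem_enum.
case: (undup _) => [|c [|]] //=; rewrite !inE => /eqP -> /eqP ->. by rewrite eqxx.
Qed.

Lemma cnt3 m c : (c < 3)%N -> (\sum_(0 <= i < m * 3) (i %% 3 == c : nat) = m)%N.
Proof.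
move=> hc. elim: m => [|m IH]; first by rewrite big_geq.
have -> : (m.+1 * 3 = (m * 3).+3)%N by rewrite mulSnr addn3.
rewrite !big_nat_recr //= IH.
have e0 : ((m * 3) %% 3 = 0)%N by rewrite modnMl.
have e1 : ((m * 3).+1 %% 3 = 1)%N by rewrite -addn1 modnMDl.
have e2 : ((m * 3).+2 %% 3 = 2)%N by rewrite -addn2 modnMDl.
rewrite e0 e1 e2. clear IH. case: c hc => [|[|[|]]] //= _; lia.
Qed.

Lemma cntZ v m c : (1 < v)%N -> v = (m * 3)%N -> (c < 3)%N ->
  (\sum_(y : 'Z_v) (cls y == c : nat) = m)%N.
Proof.
move=> hv hvm hc. rewrite /cls.
rewrite -(big_mkord xpredT (fun i => ((i %% 3)%N == c : nat))) Zp_cast // hvm.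
exact: cnt3.
Qed.

Lemma sum_neq (T : finType) (x : T) (G : T -> bool) : G x ->
  (\sum_y ((x != y) && G y : nat) = (\sum_y (G y : nat)) - 1)%N.
Proof.
move=> hG. rewrite [in RHS](bigD1 x) //= hG addKn (bigD1 x) //= eqxx /= add0n.
apply: eq_bigr => y hy. by rewrite eq_sym hy.
Qed.



Lemma arith m A F N : (0 < m)%N -> (2 * F + 4 <= m * 3 * (m - 1))%N -> (F + N = A)%N -> (N <= m)%N ->
  (6 * A = m * 3 * (m * 3 - 1))%N -> False.
Proof.
move=> hm h1 h2 h3 h4.
have e1 : (m * 3 * (m - 1) = 3 * (m * m) - 3 * m)%N by rewrite mulnBr muln1; lia.
have e2 : (m * 3 * (m * 3 - 1) = 9 * (m * m) - 3 * m)%N by rewrite mulnBr muln1; lia.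
rewrite e1 in h1. rewrite e2 in h4.
have : (m <= m * m)%N by rewrite leq_pmull.
move: (m * m) h1 h4 => t h1 h4 ht. lia.
Qed.

Theorem mainTheorem4 (v : nat) (B : {set {set 'Z_v}}) :
  (v %% 18 = 3 \/ v %% 18 = 15)%N ->
  is_STS B -> is_cyclic B ->
  (forall b, b \in B -> full_orbit b -> ~ orbit_of_type (block_orbit b) 3) ->
  forall b, b \in B -> full_orbit b -> ~ orbit_of_type (block_orbit b) 1.
Proof.
move=> hmod hSTS _ hno3 b0 hb0 hfull0 htype1.
have hv : (1 < v)%N by lia.
set m := (v %/ 3)%N.
have hvm : v = (m * 3)%N by rewrite /m; lia.
have ho : (v %% 2 = 1)%N by lia.
have hm0 : (0 < m)%N by lia.
have h3v : (3 %| v)%N by rewrite hvm dvdn_mull.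
have hB3 := hSTS.1.
set M : 'Z_v := (m%:R : 'Z_v).
have hM : nat_of_ord M = m by rewrite /M val_Zp_nat // modn_small //; lia.
have hin0 : b0 \in block_orbit b0 by apply/imsetP; exists 0; rewrite ?transl0.
have hn1 : n_classes b0 = 1%N := htype1 b0 hin0.
have hfullhp : forall b, b \in B -> #|block_orbit b| == v -> hp b.
  move=> b hb hf. case: (boolP (hp b)) => // hnp; exfalso.
  apply: (hno3 b hb (eqP hf)) => c /imsetP[k _ ->].
  apply/eqP; rewrite nc3; last by rewrite card_transl hB3.
  apply: contra hnp. exact: hp_transl.
set Q := fun x y : 'Z_v => cls x == cls y.
have hlow : forall b, b \in B ->
    (2 * (#|block_orbit b| == v) + 4 * (b == b0) <= pc b Q)%N.
  move=> b hb. case: (eqVneq b b0) => [->|hne].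
  - rewrite hfull0 eqxx pc_all //; first exact: hB3.
    exact: nc1.
  - case: (boolP (#|block_orbit b| == v)) => hf /=; last by [].
    rewrite muln0 addn0 muln1. exact: hp_pc (hfullhp b hb hf).
have hS : (\sum_(b in B) pc b Q = v * (m - 1))%N.
  rewrite dcount //. transitivity (\sum_(x : 'Z_v) (m - 1))%N; last by rewrite sum_nat_const cardZ.
  apply: eq_bigr => x _.
  rewrite sum_neq /Q ?eqxx //. congr (_ - 1)%N.
  rewrite (eq_bigr (fun y => (cls y == cls x : nat))); last by move=> y _; rewrite eq_sym.
  apply: cntZ => //. exact: ltn_pmod.
have hA : (\sum_(b in B) pc b (fun _ _ => true) = v * (v - 1))%N.
  rewrite dcount //. transitivity (\sum_(x : 'Z_v) (v - 1))%N; last by rewrite sum_nat_const cardZ.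
  apply: eq_bigr => x _.
  have := @sum_neq _ x (fun _ => true) erefl. rewrite /= => ->.
  by rewrite sum1_card cardZ.
have hA6 : (6 * #|B| = v * (v - 1))%N.
  rewrite -hA -sum1_card big_distrr /=. apply: eq_bigr => b hb.
  by rewrite muln1 pc_all // hB3.
have hNF : (\sum_(b in B) (~~ (#|block_orbit b| == v) : nat) <= m)%N.
  rewrite -card_setin.
  apply: (@leq_trans #|[set b in B | translate b M == b]|).
    apply: subset_leq_card. apply/subsetP => b; rewrite !inE => /andP[hb hnf].
    rewrite hb /=. have [d [hd0 hfix]] := nonfull_fix hv hnf.
    apply/eqP; apply: (@fix_M v m M b d hv ho _ hM _ hd0 hfix); [by rewrite mulnC | exact: hB3].
  have := fix_count hv hM hm0 hSTS. lia.
have hsplit : (\sum_(b in B) (#|block_orbit b| == v : nat) +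
               \sum_(b in B) (~~ (#|block_orbit b| == v) : nat) = #|B|)%N.
  rewrite -big_split /= -sum1_card. apply: eq_bigr => b _. by case: (_ == _).
have h1 : (\sum_(b in B) (b == b0 : nat) = 1)%N.
  rewrite (bigD1 b0) //= eqxx big1 // => b /andP[_ /negbTE ->]. done.
have hsum : (\sum_(b in B) (2 * (#|block_orbit b| == v) + 4 * (b == b0)) <= \sum_(b in B) pc b Q)%N.
  by apply: leq_sum.
rewrite big_split /= -!big_distrr /= h1 hS in hsum.
have hv' : (v * (m - 1) = m * 3 * (m - 1))%N by rewrite hvm.
apply: (arith hm0 _ hsplit hNF).
  by move: hsum; rewrite muln1 hv'.
by rewrite hA6 hvm.
Qed.
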